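(* Let $A\in \mathbb{Z}^{m\times n}$, $b\in \mathbb{Z}^m$, and $P:=\{x\in\mathbb{R}^n:Ax\leq b\}$. For a nonempty face $F$ of $P$, denote by $A_Fx\leq b_F$ the subsystem of $Ax\leq b$ consisting of the implicit equalities of $F$, i.e. those inequalities $a_i^\top x\le b_i$ of $Ax\le b$ with $a_i^\top x=b_i$ for all $x\in F$. Then for every prime $p$ the following are equivalent: (1) $Ax\leq b$ is totally dual $p$-adic; (2) for every nonempty face $F$ of $P$, the rows of $A_F$ form a $p$-adic generating set for a cone; (3) for every nonempty face $F$ of $P$, the rows of $A_F$ form a $p$-adic generating set for a subspace.
   Context: Let $p$ be a prime. A $p$-adic rational is a number of the form $a/p^k$ with $a,k$ integers and $k\ge 0$; a vector is $p$-adic if all its entries are $p$-adic rationals. A system $Ax\le b$ with $A\in\mathbb{Z}^{m\times n}$, $b\in\mathbb{Z}^m$ is totally dual $p$-adic if for every $w\in\mathbb{Z}^n$ for which $\min\{b^\top y: A^\top y=w,\ y\ge \mathbf{0}\}$ has an optimal solution, it has a $p$-adic optimal solution. A finite set $\{a^1,\dots,a^n\}\subseteq\mathbb{Z}^m$ is a $p$-adic generating set for a cone if every integral vector in its conic hull is a conic combination of $a^1,\dots,a^n$ with $p$-adic coefficients; it is a $p$-adic generating set for a subspace if every integral vector in its linear hull is a linear combination of $a^1,\dots,a^n$ with $p$-adic coefficients. *)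

(* Defs.v *)
From HB Require Import structures.
From mathcomp Require Import all_boot all_order all_algebra.
From mathcomp Require Import reals.
Set Implicit Arguments. Unset Strict Implicit. Unset Printing Implicit Defensive.
Import Order.TTheory GRing.Theory Num.Theory.
Local Open Scope ring_scope.

Section Defs.
Variable R : realType.

Definition mxR (k l : nat) (M : 'M[int]_(k, l)) : 'M[R]_(k, l) :=
  map_mx (fun z : int => z%:~R) M.

Definition padic (p : nat) (x : R) : Prop :=
  exists (a : int) (k : nat), x = a%:~R / (p%:R ^+ k).

Variables (m n : nat).

Definition polyhedron (A : 'M[int]_(m, n)) (b : 'cV[int]_m) (x : 'cV[R]_n) : Prop :=
  forall i : 'I_m, (mxR A *m x) i 0 <= mxR b i 0.

Definition is_face (P F : 'cV[R]_n -> Prop) : Prop :=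
  exists (c : 'cV[R]_n) (d : R),
    (forall x, P x -> (c^T *m x) 0 0 <= d) /\
    (forall x, F x <-> (P x /\ (c^T *m x) 0 0 = d)).

Definition implicit_eq (A : 'M[int]_(m, n)) (b : 'cV[int]_m)
  (F : 'cV[R]_n -> Prop) (i : 'I_m) : Prop :=
  forall x, F x -> (mxR A *m x) i 0 = mxR b i 0.

Definition dual_feasible (A : 'M[int]_(m, n)) (w : 'cV[int]_n) (y : 'cV[R]_m) : Prop :=
  (mxR A)^T *m y = mxR w /\ forall i, 0 <= y i 0.

Definition dual_optimal (A : 'M[int]_(m, n)) (b : 'cV[int]_m) (w : 'cV[int]_n)
  (y : 'cV[R]_m) : Prop :=
  dual_feasible A w y /\
  forall y', dual_feasible A w y' -> ((mxR b)^T *m y) 0 0 <= ((mxR b)^T *m y') 0 0.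

Definition totally_dual_padic (p : nat) (A : 'M[int]_(m, n)) (b : 'cV[int]_m) : Prop :=
  forall w : 'cV[int]_n,
    (exists y, dual_optimal A b w y) ->
    exists y, dual_optimal A b w y /\ forall i, padic p (y i 0).

Definition padic_gen_cone (p : nat) (A : 'M[int]_(m, n)) (I : 'I_m -> Prop) : Prop :=
  forall w : 'rV[int]_n,
    (exists lam : 'I_m -> R, (forall i, 0 <= lam i) /\ (forall i, ~ I i -> lam i = 0) /\
        mxR w = \sum_(i < m) lam i *: mxR (row i A)) ->
    exists lam : 'I_m -> R, (forall i, 0 <= lam i /\ padic p (lam i)) /\
        (forall i, ~ I i -> lam i = 0) /\
        mxR w = \sum_(i < m) lam i *: mxR (row i A).

Definition padic_gen_subspace (p : nat) (A : 'M[int]_(m, n)) (I : 'I_m -> Prop) : Prop :=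
  forall w : 'rV[int]_n,
    (exists lam : 'I_m -> R, (forall i, ~ I i -> lam i = 0) /\
        mxR w = \sum_(i < m) lam i *: mxR (row i A)) ->
    exists lam : 'I_m -> R, (forall i, padic p (lam i)) /\
        (forall i, ~ I i -> lam i = 0) /\
        mxR w = \sum_(i < m) lam i *: mxR (row i A).

End Defs.

(* Main.v *)
Require Import Defs.
From HB Require Import structures.
From mathcomp Require Import all_boot all_order all_algebra.
From mathcomp Require Import reals.
From mathcomp Require Import ring lra zify.
From Stdlib Require Import Classical IndefiniteDescription.
Import Order.TTheory GRing.Theory Num.Theory.
Local Open Scope ring_scope.
Set Implicit Arguments. Unset Strict Implicit. Unset Printing Implicit Defensive.

Section Farkas.
Variable R : realFieldType.

Lemma sum_delta (I : finType) (i : I) (f : I -> R) :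
  \sum_k (k == i)%:R * f k = f i.
Proof.
rewrite (bigD1 i) //= eqxx mul1r big1 ?addr0 // => k /negbTE ->; by rewrite mul0r.
Qed.

Lemma sep_seq (L U : seq R) :
  (forall l u, l \in L -> u \in U -> l <= u) ->
  exists t, (forall l, l \in L -> l <= t) /\ (forall u, u \in U -> t <= u).
Proof.
move=> H.
have maxge : forall (x : R) s, x <= foldr Num.max x s /\ forall l, l \in s -> l <= foldr Num.max x s.
  move=> x; elim=> [|y s [IH1 IH2]] /=; first by split.
  split; first by rewrite le_max IH1 orbT.
  move=> l; rewrite inE => /orP [/eqP ->|/IH2 h]; first by rewrite le_max lexx.
  by rewrite le_max h orbT.
have maxin : forall (x : R) s, foldr Num.max x s \in x :: s.
  move=> x; elim=> [|y s IH] /=; first by rewrite inE.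
  rewrite /Num.max; case: ifP => _; rewrite !inE ?eqxx ?orbT //.
  move: IH; rewrite inE => /orP [->|h]; first by [].
  by rewrite h !orbT.
have minle : forall (x : R) s, forall u, u \in s -> foldr Num.min x s <= u.
  move=> x; elim=> [|y s IH] //= u; rewrite inE => /orP [/eqP ->|/IH h].
    by rewrite ge_min lexx.
  by rewrite ge_min h orbT.
case: L H => [|l0 L] H.
  by exists (foldr Num.min 0 U); split => // u /minle.
exists (foldr Num.max l0 L); split.
  move=> l; rewrite inE => /orP [/eqP ->|]; first exact: (proj1 (maxge l0 L)).
  exact: (proj2 (maxge l0 L)).
move=> u hu; exact: H (maxin _ _) hu.
Qed.

Lemma big_opt (I : finType) (F : option I -> R) :
  \sum_k F k = F None + \sum_i F (Some i).
Proof.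
rewrite [LHS](bigD1 None) //=; congr (_ + _).
have [i0|] := pickP I.
- move=> _. rewrite (reindex_onto Some (fun o => odflt i0 o)) /=.
    apply: eq_bigl => i. by rewrite eqxx.
  by case=> // _.
- move=> h; rewrite !big1 // => [i|[i|]] //; by have := h i.
Qed.

Lemma sum_comb (I : finType) (f g c : I -> R) (d : R) :
  \sum_i ((f i + g i) / d) * c i = (\sum_i f i * c i + \sum_i g i * c i) / d.
Proof.
rewrite -big_split mulr_suml; apply: eq_bigr => i _ /=.
by rewrite -mulrDl mulrAC.
Qed.

Lemma sum_combr (I : finType) (f g c : I -> R) (d : R) :
  \sum_i c i * ((f i + g i) / d) = (\sum_i c i * f i + \sum_i c i * g i) / d.
Proof.
rewrite -big_split mulr_suml; apply: eq_bigr => i _ /=.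
by rewrite -mulrDr mulrA.
Qed.

Variable J : finType.

Definition dotf (a x : J -> R) := \sum_j a j * x j.

Definition feasible (I : finType) (a : I -> J -> R) (be : I -> R) :=
  exists x : J -> R, forall i, dotf (a i) x <= be i.

Definition certificate (I : finType) (a : I -> J -> R) (be : I -> R) :=
  exists y : I -> R, (forall i, 0 <= y i) /\ (forall j, \sum_i y i * a i j = 0)
     /\ \sum_i y i * be i < 0.

Lemma cert_transfer (I1 I2 : finType) (a1 : I1 -> J -> R) (b1 : I1 -> R)
  (a2 : I2 -> J -> R) (b2 : I2 -> R) (c : I2 -> I1 -> R) :
  (forall i2 i1, 0 <= c i2 i1) ->
  (forall i2 j, a2 i2 j = \sum_i1 c i2 i1 * a1 i1 j) ->
  (forall i2, b2 i2 = \sum_i1 c i2 i1 * b1 i1) ->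
  certificate a2 b2 -> certificate a1 b1.
Proof.
move=> c0 ha hb [y [y0 [ya yb]]].
exists (fun i1 => \sum_i2 y i2 * c i2 i1); split; [|split].
- by move=> i1; apply: sumr_ge0 => i2 _; apply: mulr_ge0.
- move=> j; rewrite -[RHS](ya j).
  under eq_bigr do rewrite mulr_suml.
  rewrite exchange_big /=; apply: eq_bigr => i2 _.
  by rewrite ha mulr_sumr; apply: eq_bigr => i1 _; rewrite mulrA.
- apply: le_lt_trans yb; rewrite le_eqVlt; apply/orP; left; apply/eqP.
  under eq_bigr do rewrite mulr_suml.
  rewrite exchange_big /=; apply: eq_bigr => i2 _.
  by rewrite hb mulr_sumr; apply: eq_bigr => i1 _; rewrite mulrA.
Qed.

Definition upd (x : J -> R) (j0 : J) (t : R) := fun k => if k == j0 then t else x k.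

Lemma dot_upd (a x : J -> R) j0 t :
  dotf a (upd x j0 t) = dotf a x + a j0 * (t - x j0).
Proof.
rewrite /dotf (bigD1 j0) //= [in RHS](bigD1 j0) //= /upd eqxx.
have -> : \sum_(i | i != j0) a i * (if i == j0 then t else x i) =
          \sum_(i | i != j0) a i * x i.
  by apply: eq_bigr => i /negbTE ->.
by rewrite mulrBr; lra.
Qed.

Section Step.
Variables (I : finType) (a : I -> J -> R) (be : I -> R) (j0 : J).

Definition pos i := 0 < a i j0.
Definition neg i := a i j0 < 0.

Definition FI := (I + I * I)%type.

Definition a' (k : FI) : J -> R :=
  match k with
  | inl i => if a i j0 == 0 then a i else fun _ => 0
  | inr (p, n) => if pos p && neg n then fun j => - a n j0 * a p j + a p j0 * a n j
                  else fun _ => 0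
  end.
Definition b' (k : FI) : R :=
  match k with
  | inl i => if a i j0 == 0 then be i else 0
  | inr (p, n) => if pos p && neg n then - a n j0 * be p + a p j0 * be n else 0
  end.
Definition c' (k : FI) (i1 : I) : R :=
  match k with
  | inl i => if a i j0 == 0 then (i1 == i)%:R else 0
  | inr (p, n) => if pos p && neg n then - a n j0 * (i1 == p)%:R + a p j0 * (i1 == n)%:R
                  else 0
  end.

Lemma c'_ge0 k i1 : 0 <= c' k i1.
Proof.
case: k => [i|[p n]] /=; first by case: ifP.
case: ifP => // /andP [hp hn]; rewrite /pos /neg in hp hn.
by apply: addr_ge0; apply: mulr_ge0 => //; lra.
Qed.

Lemma c'_comb (f : I -> R) k :
  \sum_i1 c' k i1 * f i1 =
  match k with
  | inl i => if a i j0 == 0 then f i else 0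
  | inr (p, n) => if pos p && neg n then - a n j0 * f p + a p j0 * f n else 0
  end.
Proof.
case: k => [i|[p n]] /=.
  case: ifP => _; first exact: sum_delta.
  by rewrite big1 // => *; rewrite mul0r.
case: ifP => _; last by rewrite big1 // => *; rewrite mul0r.
under eq_bigr do rewrite mulrDl -!mulrA.
by rewrite big_split /= -!mulr_sumr !sum_delta.
Qed.

Lemma a'_comb k j : a' k j = \sum_i1 c' k i1 * a i1 j.
Proof. by rewrite c'_comb; case: k => [i|[p n]] /=; case: ifP. Qed.

Lemma b'_comb k : b' k = \sum_i1 c' k i1 * be i1.
Proof. by rewrite c'_comb; case: k => [i|[p n]] /=; case: ifP. Qed.

Lemma a'_j0 k : a' k j0 = 0.
Proof.
case: k => [i|[p n]] /=; first by case: ifP => // /eqP.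
by case: ifP => // _; rewrite mulrC; lra.
Qed.

Lemma lift_feasible : feasible a' b' -> feasible a be.
Proof.
move=> [x hx].
pose U p := x j0 + (be p - dotf (a p) x) / a p j0.
pose L n := x j0 + (be n - dotf (a n) x) / a n j0.
have hLU : forall p n, pos p -> neg n -> L n <= U p.
  move=> p n hp hn; rewrite /pos /neg in hp hn.
  have := hx (inr (p, n)); rewrite /= /pos /neg hp hn /=.
  have -> : dotf (fun j => - a n j0 * a p j + a p j0 * a n j) x =
            - a n j0 * dotf (a p) x + a p j0 * dotf (a n) x.
    rewrite /dotf !mulr_sumr -big_split /=; apply: eq_bigr => j _.
    by rewrite mulrDl !mulrA.
  move=> h; rewrite /L /U lerD2l.
  set u := (be p - dotf (a p) x) / a p j0.
  set v := (be n - dotf (a n) x) / a n j0.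
  have hu : u * a p j0 = be p - dotf (a p) x by rewrite /u divfK // gt_eqF.
  have hv : v * a n j0 = be n - dotf (a n) x by rewrite /v divfK // lt_eqF.
  have key : 0 <= (a p j0 * a n j0) * (v - u).
    have -> : (a p j0 * a n j0) * (v - u) = - a n j0 * (u * a p j0) + a p j0 * (v * a n j0).
      by ring.
    rewrite hu hv; lra.
  have hP : a p j0 * a n j0 < 0 by rewrite pmulr_rlt0.
  move: key hP; set P := a p j0 * a n j0 => key hP.
  nra.
have hsep : forall l u, l \in [seq L n | n <- enum I & neg n] ->
     u \in [seq U p | p <- enum I & pos p] -> l <= u.
  move=> l u /mapP [n] ; rewrite mem_filter => /andP [hn _] -> /mapP [p].
  by rewrite mem_filter => /andP [hp _] ->; apply: hLU.
have [t [ht1 ht2]] := sep_seq hsep.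
exists (upd x j0 t) => i; rewrite dot_upd.
case: (ltrgtP (a i j0) 0) => hi.
- have hLi : L i \in [seq L n | n <- enum I & neg n].
    by apply: map_f; rewrite mem_filter mem_enum andbT.
  have := ht1 _ hLi.
  rewrite /L; set v := (be i - dotf (a i) x) / a i j0 => hv.
  have hv' : v * a i j0 = be i - dotf (a i) x by rewrite /v divfK // lt_eqF.
  nra.
- have hUi : U i \in [seq U p | p <- enum I & pos p].
    by apply: map_f; rewrite mem_filter mem_enum andbT.
  have := ht2 _ hUi.
  rewrite /U; set v := (be i - dotf (a i) x) / a i j0 => hv.
  have hv' : v * a i j0 = be i - dotf (a i) x by rewrite /v divfK // gt_eqF.
  nra.
- have := hx (inl i); rewrite /= hi eqxx mul0r addr0.
  done.
Qed.

End Step.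

Lemma farkas_k k : forall (S : {set J}), #|S| = k ->
  forall (I : finType) (a : I -> J -> R) (be : I -> R),
  (forall i j, j \notin S -> a i j = 0) -> ~ feasible a be -> certificate a be.
Proof.
elim: k => [|k IH] S hS I a be ha hinf.
  move/cards0_eq: hS => hS; subst S.
  case: (boolP [forall i, 0 <= be i]) => [/forallP hb|].
    exfalso; apply: hinf; exists (fun _ => 0) => i.
    by rewrite /dotf big1 // => j _; rewrite mulr0.
  rewrite negb_forall => /existsP [i hi].
  exists (fun k => (k == i)%:R); split; [|split].
  - by move=> k'; case: (_ == _).
  - by move=> j; rewrite sum_delta ha ?inE.
  - by rewrite sum_delta ltNge.
have : (0 < #|S|)%N by rewrite hS.
rewrite card_gt0 => /set0Pn [j0 hj0].
have hS' : #|S :\ j0| = k.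
  by move: hS; rewrite (cardsD1 j0) hj0 add1n => -[].
apply: (cert_transfer (c := c' a j0)).
- exact: c'_ge0.
- exact: a'_comb.
- exact: b'_comb.
apply: (IH _ hS').
- move=> i2 j; rewrite !inE negb_and negbK => /orP [/eqP ->|hj].
    exact: a'_j0.
  case: i2 => [i|[p n]] /=.
    by case: ifP => // _; rewrite ha.
  by case: ifP => // _; rewrite (ha p j hj) (ha n j hj) !mulr0 addr0.
- by move=> /lift_feasible.
Qed.

Lemma farkas (I : finType) (a : I -> J -> R) (be : I -> R) :
  ~ feasible a be -> certificate a be.
Proof.
apply: (farkas_k (S := setT)) => // i j; by rewrite inE.
Qed.

End Farkas.


Section LP.
Variable R : realType.
Variables (m n : nat) (A : 'M[int]_(m, n)) (b : 'cV[int]_m).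

Definition aR i j : R := (A i j)%:~R.
Definition bR i : R := (b i 0)%:~R.
Definition Ax (x : 'cV[R]_n) i := \sum_j aR i j * x j 0.
Definition cost (y : 'cV[R]_m) := \sum_i y i 0 * bR i.
Definition wx (w : 'cV[int]_n) (x : 'cV[R]_n) := \sum_j (w j 0)%:~R * x j 0.

Lemma AxE x i : (mxR R A *m x) i 0 = Ax x i.
Proof. by rewrite mxE; apply: eq_bigr => j _; rewrite mxE. Qed.

Lemma polyE x : polyhedron A b x <-> forall i, Ax x i <= bR i.
Proof.
rewrite /polyhedron; split => h i; move: (h i); by rewrite AxE /bR mxE.
Qed.

Lemma costE y : ((mxR R b)^T *m y) 0 0 = cost y.
Proof. by rewrite mxE; apply: eq_bigr => i _; rewrite !mxE mulrC. Qed.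

Lemma dual_feasibleE w y : dual_feasible A w y <->
  (forall j, \sum_i y i 0 * aR i j = (w j 0)%:~R) /\ forall i, 0 <= y i 0.
Proof.
split => -[h hy]; split => //.
- move=> j; move/matrixP: h => /(_ j 0); rewrite !mxE => <-.
  by apply: eq_bigr => i _; rewrite !mxE mulrC.
- apply/matrixP => j k; rewrite (ord1 k) !mxE -h.
  by apply: eq_bigr => i _; rewrite !mxE mulrC.
Qed.

Lemma wd_id w y x : dual_feasible A w y ->
  cost y - wx w x = \sum_i y i 0 * (bR i - Ax x i).
Proof.
move/dual_feasibleE => [h _].
have e : \sum_j (\sum_i y i 0 * aR i j) * x j 0 = \sum_i y i 0 * Ax x i.
  under eq_bigr do rewrite mulr_suml.
  rewrite exchange_big; apply: eq_bigr => i _ /=.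
  by rewrite /Ax mulr_sumr; apply: eq_bigr => j _; rewrite mulrA.
have e2 : wx w x = \sum_i y i 0 * Ax x i.
  by rewrite -e /wx; apply: eq_bigr => j _; rewrite h.
by rewrite e2 /cost -sumrB; apply: eq_bigr => i _; rewrite mulrBr.
Qed.

Lemma weak_dual w y x : dual_feasible A w y -> polyhedron A b x -> wx w x <= cost y.
Proof.
move=> hf /polyE hx; rewrite -subr_ge0 wd_id //.
apply: sumr_ge0 => i _; apply: mulr_ge0; first by case/dual_feasibleE: hf.
by rewrite subr_ge0.
Qed.

Lemma slack w y x : dual_feasible A w y -> polyhedron A b x -> wx w x = cost y ->
  forall i, y i 0 * (bR i - Ax x i) = 0.
Proof.
move=> hf /polyE hx he i.
have h0 : \sum_i y i 0 * (bR i - Ax x i) = 0 by rewrite -(wd_id x hf) he subrr.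
apply: (psumr_eq0P _ h0) => // k _; apply: mulr_ge0; first by case/dual_feasibleE: hf.
by rewrite subr_ge0.
Qed.

Lemma comb_feasible w ys (u : 'I_m -> R) t :
  dual_feasible A w ys -> 0 <= t -> (forall i, 0 <= u i) ->
  (forall j, \sum_i u i * aR i j = t * (w j 0)%:~R) ->
  dual_feasible A w (\col_i ((u i + ys i 0) / (t + 1))) /\
  cost (\col_i ((u i + ys i 0) / (t + 1))) = (\sum_i u i * bR i + cost ys) / (t + 1).
Proof.
move=> /dual_feasibleE [hf hy] ht hu hua.
have ht1 : 0 < t + 1 by lra.
split; last first.
  by rewrite /cost; under eq_bigr do rewrite mxE; rewrite sum_comb.
apply/dual_feasibleE; split.
- move=> j; under eq_bigr do rewrite mxE; rewrite sum_comb hua hf.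
  have ht0 : t + 1 != 0 by rewrite gt_eqF.
  rewrite -[RHS](mulfK ht0); congr (_ / _); ring.
- move=> i; rewrite mxE; apply: divr_ge0; last by lra.
  by apply: addr_ge0.
Qed.

Lemma sd w ys : dual_optimal A b w ys -> exists x, polyhedron A b x /\ cost ys <= wx w x.
Proof.
move=> [hf hopt]; apply: NNPP => hne.
pose a (k : option 'I_m) (j : 'I_n) : R := if k is Some i then aR i j else - (w j 0)%:~R.
pose be (k : option 'I_m) : R := if k is Some i then bR i else - cost ys.
have : ~ feasible a be.
  move=> [x hx]; apply: hne; exists (\col_j x j); split.
    apply/polyE => i; apply: le_trans (hx (Some i)); rewrite /dotf /Ax /=.
    by under eq_bigr do rewrite mxE.
  have := hx None; rewrite /dotf /=.
  under eq_bigr do rewrite mulNr; rewrite sumrN lerN2 => h.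
  by rewrite /wx; under eq_bigr do rewrite mxE.
move/farkas => [y [y0 [ya yb]]].
pose t := y None; pose u i := y (Some i).
have hua : forall j, \sum_i u i * aR i j = t * (w j 0)%:~R.
  move=> j; have := ya j; rewrite big_opt /= => h; rewrite /u /t; lra.
have [hf' hc'] := comb_feasible hf (y0 None) (fun i => y0 (Some i)) hua.
have := hopt _ hf'; rewrite !costE hc'.
move: yb; rewrite big_opt /= => yb.
have ht1 : 0 < t + 1 by have := y0 None; rewrite /t; lra.
rewrite ler_pdivlMr // => h.
have : \sum_i u i * bR i < t * cost ys by rewrite /u /t; lra.
nra.
Qed.

Lemma strict_comp w ys x0 i0 : dual_optimal A b w ys -> polyhedron A b x0 ->
  cost ys <= wx w x0 ->
  (forall x : 'cV[R]_n, polyhedron A b x -> cost ys <= wx w x -> Ax x i0 = bR i0) ->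
  exists y : 'cV[R]_m, dual_optimal A b w y /\ 0 < y i0 0.
Proof.
move=> [hf hopt] hx0 hx0w himp; apply: NNPP => hne.
pose a (k : option (option 'I_m)) (j : option 'I_n) : R :=
  match k, j with
  | Some (Some i), Some j => aR i j
  | Some (Some i), None => bR i
  | Some None, Some _ => 0
  | Some None, None => 1
  | None, Some j => - (w j 0)%:~R
  | None, None => - cost ys end.
pose be (k : option (option 'I_m)) : R :=
  match k with Some (Some i) => - (i == i0)%:R | _ => 0 end.
have : ~ feasible a be.
  move=> [z hz].
  have hzN : z None <= 0.
    have := hz (Some None); rewrite /dotf big_opt /= mul1r big1 ?addr0 //.
    by move=> j _; rewrite mul0r.
  have hl1 : 0 < - z None + 1 by lra.
  have hl0 : - z None + 1 != 0 by rewrite gt_eqF.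
  pose xx := \col_j ((z (Some j) + x0 j 0) / (- z None + 1)).
  have hAx : forall i, Ax xx i = (\sum_j aR i j * z (Some j) + Ax x0 i) / (- z None + 1).
    by move=> i; rewrite /Ax; under eq_bigr do rewrite mxE; rewrite sum_combr.
  have hrow : forall i, \sum_j aR i j * z (Some j) <= - (i == i0)%:R - bR i * z None.
    move=> i; have := hz (Some (Some i)); rewrite /dotf big_opt /= => h; lra.
  move/polyE: hx0 => hx0.
  have hxx : polyhedron A b xx.
    apply/polyE => i; rewrite hAx ler_pdivrMr //.
    have := hrow i; have := hx0 i; have : 0 <= (i == i0)%:R :> R by rewrite ler0n.
    lra.
  have hwx : cost ys <= wx w xx.
    rewrite /wx; under eq_bigr do rewrite mxE; rewrite sum_combr ler_pdivlMr //.
    have := hz None; rewrite /dotf big_opt /=.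
    under eq_bigr do rewrite mulNr; rewrite sumrN => h.
    rewrite /wx in hx0w; lra.
  have := himp xx hxx hwx; rewrite hAx => /(congr1 (fun v => v * (- z None + 1))).
  rewrite divfK //.
  have := hrow i0; have := hx0 i0; rewrite eqxx /= => h1 h2 h3.
  lra.
move/farkas => [y [y0 [ya yb]]].
pose t := y None; pose sg := y (Some None); pose u i := y (Some (Some i)).
have hua : forall j, \sum_i u i * aR i j = t * (w j 0)%:~R.
  move=> j; have := ya (Some j); rewrite big_opt big_opt /= mulr0 add0r => h.
  rewrite /u /t; lra.
have hub : \sum_i u i * bR i = t * cost ys - sg.
  have := ya None; rewrite big_opt big_opt /= mulr1 => h.
  rewrite /u /t /sg; lra.
have hu0 : 0 < u i0.
  move: yb; rewrite big_opt big_opt /= !mulr0 !add0r.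
  under eq_bigr do rewrite mulrN mulrC; rewrite sumrN sum_delta.
  rewrite /u; lra.
have [hf' hc'] := comb_feasible hf (y0 None) (fun i => y0 (Some (Some i))) hua.
apply: hne; exists (\col_i ((u i + ys i 0) / (t + 1))); split; last first.
  rewrite mxE; apply: divr_gt0; last by have := y0 None; rewrite /t; lra.
  by have [_ hy] := (proj1 (dual_feasibleE _ _) hf); have := hy i0; lra.
split => // y'' h''; apply: le_trans (hopt y'' h''); rewrite !costE hc'.
have ht1 : 0 < t + 1 by have := y0 None; rewrite /t; lra.
rewrite ler_pdivrMr // hub.
have : 0 <= sg by apply: y0.
rewrite /t; lra.
Qed.

End LP.


Section Padic.
Variable R : realType.
Variable p : nat.
Hypothesis hp : prime p.

Lemma p_neq0 : (p%:R : R) != 0.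
Proof. by rewrite pnatr_eq0 -lt0n prime_gt0. Qed.

Lemma padic_int (z : int) : padic p (z%:~R : R).
Proof. by exists z, 0%N; rewrite expr0 divr1. Qed.

Lemma padic_add (x y : R) : padic p x -> padic p y -> padic p (x + y).
Proof.
move=> [a [k ->]] [a' [k' ->]].
exists (a * (p ^ k')%:Z + a' * (p ^ k)%:Z), (k + k')%N.
have h1 : (p%:R ^+ k : R) != 0 by rewrite expf_neq0 // p_neq0.
have h2 : (p%:R ^+ k' : R) != 0 by rewrite expf_neq0 // p_neq0.
have e : forall q : nat, ((q%:Z)%:~R : R) = q%:R by [].
rewrite exprD intrD !intrM !e !natrX.
by field; rewrite h1 h2.
Qed.

Lemma padic_mul (x y : R) : padic p x -> padic p y -> padic p (x * y).
Proof.
move=> [a [k ->]] [a' [k' ->]].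
exists (a * a'), (k + k')%N.
have h1 : (p%:R ^+ k : R) != 0 by rewrite expf_neq0 // p_neq0.
have h2 : (p%:R ^+ k' : R) != 0 by rewrite expf_neq0 // p_neq0.
rewrite exprD rmorphM /=. by field; rewrite h1 h2.
Qed.

Lemma padic_invp k : padic p ((p%:R ^+ k : R)^-1).
Proof. by exists 1, k; rewrite mul1r. Qed.

Lemma padic_opp (x : R) : padic p x -> padic p (- x).
Proof. by move=> h; rewrite -mulN1r; apply: padic_mul => //; apply: (padic_int (-1)). Qed.

Lemma padic_sub (x y : R) : padic p x -> padic p y -> padic p (x - y).
Proof. by move=> hx hy; apply: padic_add => //; apply: padic_opp. Qed.
End Padic.

Section Dirs.
Variable R : realType.
Variables (m n : nat) (A : 'M[int]_(m, n)) (b : 'cV[int]_m).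
Variable p : nat.
Hypothesis hp : prime p.

Lemma repE (v : 'rV[int]_n) (lam : 'I_m -> R) :
  mxR R v = \sum_(i < m) lam i *: mxR R (row i A) <->
  forall j, \sum_i lam i * aR R A i j = (v 0 j)%:~R.
Proof.
have e : forall j, (\sum_(i < m) lam i *: mxR R (row i A)) 0 j = \sum_i lam i * aR R A i j.
  by move=> j; rewrite summxE; apply: eq_bigr => i _; rewrite !mxE.
split.
- move/matrixP => h j; rewrite -e -h mxE //.
- move=> h; apply/matrixP => i j; rewrite (ord1 i) e h mxE //.
Qed.

Lemma wxE (w : 'cV[int]_n) (x : 'cV[R]_n) : ((mxR R w)^T *m x) 0 0 = wx w x.
Proof. by rewrite mxE; apply: eq_bigr => j _; rewrite !mxE. Qed.

Lemma face_sub (F : 'cV[R]_n -> Prop) : is_face (polyhedron A b) F -> forall x, F x -> polyhedron A b x.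
Proof. by move=> [c [d [_ hF]]] x /hF []. Qed.

Lemma implE (F : 'cV[R]_n -> Prop) i : implicit_eq A b F i -> forall x, F x -> Ax A x i = bR R b i.
Proof. by move=> h x /h; rewrite AxE mxE. Qed.

Lemma not_implE (F : 'cV[R]_n -> Prop) i : ~ implicit_eq A b F i ->
  exists x, F x /\ Ax A x i <> bR R b i.
Proof.
move=> h; apply: NNPP => h2; apply: h => x hx.
apply: NNPP => h3; apply: h2; exists x; split => //.
by move=> h4; apply: h3; rewrite AxE h4 /bR mxE.
Qed.

Lemma dir12 : totally_dual_padic R p A b ->
  forall F : 'cV[R]_n -> Prop, is_face (polyhedron A b) F -> (exists x, F x) ->
  padic_gen_cone R p A (implicit_eq A b F).
Proof.
move=> htd F hF [x0 hx0] w [lam [hl0 [hsupp /repE hrep]]].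
pose wc := w^T.
pose y : 'cV[R]_m := \col_i lam i.
have key : forall x, F x -> wx wc x = cost b y.
  move=> x hx.
  have e1 : wx wc x = \sum_i lam i * Ax A x i.
    rewrite /wx /Ax.
    under eq_bigr do rewrite mxE -hrep mulr_suml.
    rewrite exchange_big; apply: eq_bigr => i _ /=; rewrite mulr_sumr.
    by apply: eq_bigr => j _; rewrite mulrA.
  rewrite e1 /cost; apply: eq_bigr => i _; rewrite mxE.
  case: (classic (implicit_eq A b F i)) => hi.
    by rewrite (implE hi hx).
  by rewrite hsupp // !mul0r.
have hyf : dual_feasible A wc y.
  apply/dual_feasibleE; split.
  - by move=> j; rewrite mxE -hrep; apply: eq_bigr => i _; rewrite mxE.
  - by move=> i; rewrite mxE.
have hyo : dual_optimal A b wc y.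
  split => // y' hy'; rewrite !costE -(key x0 hx0).
  by apply: weak_dual hy' (face_sub hF hx0).
have [y1 [hy1o hy1p]] := htd wc (ex_intro _ y hyo).
have [hy1f hy1c] := hy1o.
have [hy1a hy10] := proj1 (dual_feasibleE _ _ _) hy1f.
exists (fun i => y1 i 0); split; [|split].
- by move=> i; split.
- move=> i /not_implE [x [hx hne]].
  have hc : wx wc x = cost b y1.
    rewrite key //; apply/eqP; rewrite eq_le.
    have := hyo.2 y1 hy1f; have := hy1c y hyf; rewrite !costE => -> ->; done.
  have := slack hy1f (face_sub hF hx) hc i => /eqP; rewrite mulf_eq0 => /orP [/eqP //|].
  by rewrite subr_eq0 => /eqP h; exfalso; apply: hne.
- apply/repE => j; rewrite hy1a mxE //.
Qed.

Lemma dir23 : (forall F : 'cV[R]_n -> Prop, is_face (polyhedron A b) F -> (exists x, F x) ->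
        padic_gen_cone R p A (implicit_eq A b F)) ->
  forall F : 'cV[R]_n -> Prop, is_face (polyhedron A b) F -> (exists x, F x) ->
        padic_gen_subspace R p A (implicit_eq A b F).
Proof.
move=> H2 F hF hne w [lam [hsupp /repE hrep]].
pose N i := Num.ceil `|lam i|.
pose w' : 'rV[int]_n := w + \sum_i N i *: row i A.
have hw' : forall j, (w' 0 j)%:~R = (w 0 j)%:~R + \sum_i (N i)%:~R * aR R A i j :> R.
  move=> j; rewrite !mxE summxE intrD rmorph_sum /=; congr (_ + _).
  by apply: eq_bigr => i _; rewrite !mxE intrM.
have hN0 : forall i, ~ implicit_eq A b F i -> N i = 0.
  by move=> i hi; rewrite /N hsupp // normr0 ceil0.
have [mu [hmu [hmus /repE hmur]]] : exists mu : 'I_m -> R,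
    (forall i, 0 <= mu i /\ padic p (mu i)) /\
    (forall i, ~ implicit_eq A b F i -> mu i = 0) /\
    mxR R w' = \sum_(i < m) mu i *: mxR R (row i A).
  apply: H2 => //; exists (fun i => lam i + (N i)%:~R); split; [|split].
  - move=> i; have h1 := ceil_ge `|lam i|; have h2 := ler_norm (- lam i).
    rewrite normrN in h2; rewrite /N; lra.
  - by move=> i hi; rewrite hsupp // hN0 // add0r.
  - apply/repE => j; rewrite hw' -hrep -big_split /=.
    by apply: eq_bigr => i _; rewrite mulrDl.
exists (fun i => mu i - (N i)%:~R); split; [|split].
- move=> i; apply: padic_sub => //; [exact: (hmu i).2|exact: padic_int].
- by move=> i hi; rewrite hmus // hN0 // subrr.
- apply/repE => j.
  have := hmur j; rewrite hw' => h.
  have e : \sum_i (mu i - (N i)%:~R) * aR R A i j =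
           \sum_i mu i * aR R A i j - \sum_i (N i)%:~R * aR R A i j.
    by rewrite -sumrB; apply: eq_bigr => i _; rewrite mulrBl.
  rewrite e h; lra.
Qed.

End Dirs.


Section Bound.
Variable R : realType.

Lemma fin_bound (T : finType) (Q : T -> R -> Prop) :
  (forall t, exists B, Q t B) -> (forall t B B', B <= B' -> Q t B -> Q t B') ->
  exists B, forall t, Q t B.
Proof.
move=> h hm.
suff : forall s : seq T, exists B, forall t, t \in s -> Q t B.
  by move=> /(_ (enum T)) [B hB]; exists B => t; apply: hB; rewrite mem_enum.
elim=> [|x s [B2 h2]]; first by exists 0.
have [B1 h1] := h x.
exists (Num.max B1 B2) => t; rewrite inE => /orP [/eqP ->|ht].
  by apply: hm (h1); rewrite le_max lexx.
by apply: hm (h2 _ ht); rewrite le_max lexx orbT.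
Qed.

Variables (m n : nat) (A : 'M[int]_(m, n)) (b : 'cV[int]_m).
Variable p : nat.
Hypothesis hp : prime p.

Lemma bounded_rep (I : 'I_m -> Prop) (C : nat) : padic_gen_subspace R p A I ->
  exists B : R, forall v : 'rV[int]_n, (forall j, `|v 0 j| <= C%:Z) ->
   (exists lam : 'I_m -> R, (forall i, ~ I i -> lam i = 0) /\
       forall j, \sum_i lam i * aR R A i j = (v 0 j)%:~R) ->
   exists nu : 'I_m -> R, (forall i, padic p (nu i)) /\ (forall i, ~ I i -> nu i = 0) /\
     (forall j, \sum_i nu i * aR R A i j = (v 0 j)%:~R) /\ forall i, `|nu i| <= B.
Proof.
move=> H.
pose g (t : {ffun 'I_n -> 'I_(C.*2.+1)}) : 'rV[int]_n := \row_j ((t j : nat)%:Z - C%:Z).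
have [B hB] : exists B : R, forall t,
   (exists lam : 'I_m -> R, (forall i, ~ I i -> lam i = 0) /\
       forall j, \sum_i lam i * aR R A i j = (g t 0 j)%:~R) ->
   exists nu : 'I_m -> R, (forall i, padic p (nu i)) /\ (forall i, ~ I i -> nu i = 0) /\
     (forall j, \sum_i nu i * aR R A i j = (g t 0 j)%:~R) /\ forall i, `|nu i| <= B.
  apply: fin_bound.
  - move=> t; case: (classic (exists lam : 'I_m -> R, (forall i, ~ I i -> lam i = 0) /\
       forall j, \sum_i lam i * aR R A i j = (g t 0 j)%:~R)) => [[lam [hl1 hl2]]|hnex].
    + have [nu [hnp [hns /repE hnr]]] := H (g t) (ex_intro _ lam (conj hl1 (proj2 (repE _ _ _) hl2))).
      exists (\sum_i `|nu i|) => _; exists nu; split; [|split; [|split]] => //.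
      by move=> i; rewrite (bigD1 i) //= lerDl sumr_ge0.
    + by exists 0 => hex; exfalso; apply: hnex.
  - move=> t B1 B2 hB12 hQ hex; have [nu [h1 [h2 [h3 h4]]]] := hQ hex.
    exists nu; split; [|split; [|split]] => // i; exact: le_trans (h4 i) hB12.
exists B => v hv hex.
pose t : {ffun 'I_n -> 'I_(C.*2.+1)} := [ffun j => inord (absz (v 0 j + C%:Z))].
have hgt : g t = v.
  apply/matrixP => i j; rewrite (ord1 i) !mxE ffunE.
  have := hv j => hvj.
  rewrite inordK; last by lia.
  lia.
by rewrite -hgt in hex *; apply: hB.
Qed.

End Bound.

Section Dir31.
Variable R : realType.
Variables (m n : nat) (A : 'M[int]_(m, n)) (b : 'cV[int]_m).
Variable p : nat.
Hypothesis hp : prime p.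

Lemma opt_cost (w : 'cV[int]_n) (y ys : 'cV[R]_m) :
  dual_optimal A b w y -> dual_optimal A b w ys -> cost b y = cost b ys.
Proof.
move=> [hf ho] [hf' ho']; apply/le_anti.
by have := ho _ hf'; have := ho' _ hf; rewrite !costE => -> ->.
Qed.

Lemma dir31 : (forall F : 'cV[R]_n -> Prop, is_face (polyhedron A b) F -> (exists x, F x) ->
        padic_gen_subspace R p A (implicit_eq A b F)) ->
  totally_dual_padic R p A b.
Proof.
move=> H3 w [ys hys].
have [x0 [hx0 hx0w]] := sd hys.
have hx0w' : wx w x0 = cost b ys by apply/le_anti; rewrite hx0w (weak_dual hys.1 hx0).
pose F := fun x : 'cV[R]_n => polyhedron A b x /\ ((mxR R w)^T *m x) 0 0 = cost b ys.
have hF : is_face (polyhedron A b) F.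
  exists (mxR R w), (cost b ys); split => // x hx; rewrite wxE; exact: weak_dual hys.1 hx.
have hFx0 : F x0 by split; rewrite ?wxE.
have hne : exists x, F x by exists x0.
have FwE : forall x, F x -> wx w x = cost b ys by move=> x [_]; rewrite wxE.
pose I := implicit_eq A b F.
have hf : forall i, exists y : 'cV[R]_m, dual_optimal A b w y /\ (I i -> 0 < y i 0).
  move=> i; case: (classic (I i)) => hi; last by exists ys.
  have [y [hyo hyp]] := strict_comp (i0 := i) hys hx0 hx0w
     (fun x hx hxw => implE hi (conj hx (etrans (wxE _ _)
          (le_anti (introT andP (conj (weak_dual hys.1 hx) hxw)))))).
  by exists y.
have [f hf'] : exists f : 'I_m -> 'cV[R]_m,
    forall i, dual_optimal A b w (f i) /\ (I i -> 0 < f i i 0).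
  exists (fun i => proj1_sig (constructive_indefinite_description _ (hf i))).
  move=> i; exact: proj2_sig (constructive_indefinite_description _ (hf i)).
pose M : R := m%:R + 1.
have hM : 0 < M by rewrite /M; have := ler0n R m; lra.
pose yh : 'cV[R]_m := \col_i ((ys i 0 + \sum_k f k i 0) / M).
have avg : forall c : 'I_m -> R, \sum_i yh i 0 * c i =
    (\sum_i ys i 0 * c i + \sum_k \sum_i f k i 0 * c i) / M.
  move=> c; under eq_bigr do rewrite mxE; rewrite sum_comb; congr ((_ + _) / _).
  under eq_bigr do rewrite mulr_suml; by rewrite exchange_big.
have hys0 := proj1 (dual_feasibleE _ _ _) hys.1.
have hf0 : forall k, _ := fun k => proj1 (dual_feasibleE _ _ _) (hf' k).1.1.
have hyhf : dual_feasible A w yh.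
  apply/dual_feasibleE; split.
  - move=> j; rewrite avg hys0.1.
    under eq_bigr do rewrite (hf0 _).1.
    rewrite sumr_const card_ord -mulr_natr.
    apply: (mulIf (lt0r_neq0 hM)); rewrite divfK ?lt0r_neq0 //; rewrite /M; ring.
  - move=> i; rewrite mxE; apply: divr_ge0; last exact: ltW.
    by apply: addr_ge0; [exact: hys0.2|apply: sumr_ge0 => k _; exact: (hf0 k).2].
have hyhc : cost b yh = cost b ys.
  rewrite /cost avg.
  under [X in _ + X]eq_bigr do rewrite -/(cost b (f _)) (opt_cost (hf' _).1 hys).
  rewrite sumr_const card_ord -mulr_natr -/(cost b ys).
  apply: (mulIf (lt0r_neq0 hM)); rewrite divfK ?lt0r_neq0 //; rewrite /M; ring.
have hyhpos : forall i, I i -> 0 < yh i 0.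
  move=> i hi; rewrite mxE; apply: divr_gt0 => //.
  have h1 := hys0.2 i.
  have h2 : f i i 0 <= \sum_k f k i 0.
    by rewrite (bigD1 i) //= lerDl sumr_ge0 // => k _; exact: (hf0 k).2.
  have := (hf' i).2 hi; lra.
have hyh0 : forall i, ~ I i -> yh i 0 = 0.
  move=> i /not_implE [x [hx hneq]].
  have := slack hyhf (face_sub hF hx) (etrans (FwE x hx) (esym hyhc)) i.
  move/eqP; rewrite mulf_eq0 => /orP [/eqP //|]; rewrite subr_eq0 => /eqP h.
  by exfalso; apply: hneq.
pose Cint : int := \sum_i \sum_j `|A i j|.
have hC0 : 0 <= Cint by apply: sumr_ge0 => i _; apply: sumr_ge0 => j _.
pose C := absz Cint.
have hCC : C%:Z = Cint by rewrite /C gez0_abs.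
have [B hB] := @bounded_rep R m n A p hp _ C (H3 F hF hne).
pose T := \sum_(i | 0 < yh i 0) (1 + `|B|) / yh i 0.
pose k := (Num.trunc T).+1.
pose N : R := p%:R ^+ k.
have hNT : T < N.
  apply: lt_le_trans (truncnS_gt T) _; rewrite /N -natrX ler_nat.
  exact: ltnW (ltn_expl _ (prime_gt1 hp)).
have hT0 : 0 <= T.
  apply: sumr_ge0 => i hi; apply: divr_ge0; first by have := normr_ge0 B; lra.
  exact: ltW.
have hN : 0 < N by lra.
have hTi : forall i, I i -> 1 + `|B| < N * yh i 0.
  move=> i hi; have hyi := hyhpos i hi.
  have : (1 + `|B|) / yh i 0 <= T.
    rewrite /T (bigD1 i) //= lerDl; apply: sumr_ge0 => k' hk'.
    apply: divr_ge0; first by have := normr_ge0 B; lra.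
    by case/andP: hk' => /ltW.
  move=> h; have : (1 + `|B|) / yh i 0 < N by lra.
  by rewrite ltr_pdivrMr // mulrC.
pose r i := Num.floor (N * yh i 0).
pose w' : 'rV[int]_n := (p ^ k)%:Z *: w^T - \sum_i r i *: row i A.
have hw' : forall j, ((w' 0 j)%:~R : R) = N * (w j 0)%:~R - \sum_i (r i)%:~R * aR R A i j.
  move=> j; rewrite !mxE summxE intrB intrM rmorph_sum /=.
  have e : ((p ^ k)%N%:Z)%:~R = N :> R by rewrite /N -natrX.
  rewrite e; congr (_ - _); apply: eq_bigr => i _; rewrite !mxE intrM //.
pose fr i := N * yh i 0 - (r i)%:~R.
have hfr : forall i, 0 <= fr i < 1.
  move=> i; have := floor_itv (N * yh i 0); rewrite intrD -/(r i) => /andP [h1 h2].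
  rewrite /fr; apply/andP; split; lra.
have hfr0 : forall i, ~ I i -> fr i = 0.
  by move=> i hi; rewrite /fr /r hyh0 // mulr0 floor0 subr0.
have hrep' : forall j, \sum_i fr i * aR R A i j = (w' 0 j)%:~R.
  move=> j; rewrite hw' /fr.
  under eq_bigr do rewrite mulrBl -mulrA.
  rewrite sumrB -mulr_sumr ((proj1 (dual_feasibleE _ _ _) hyhf).1 j) //.
have hbound : forall j, `|w' 0 j| <= C%:Z.
  move=> j; rewrite hCC -(ler_int R) intr_norm -hrep'.
  apply: le_trans (ler_norm_sum _ _ _) _.
  apply: (@le_trans _ _ (\sum_i `|aR R A i j|)).
    apply: ler_sum => i _; rewrite normrM; have := hfr i => /andP [h1 h2].
    rewrite ger0_norm //; apply: ler_piMl => //; lra.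
  rewrite /Cint rmorph_sum /=; apply: ler_sum => i _.
  rewrite rmorph_sum /= (bigD1 j) //= /aR intr_norm lerDl.
  by apply: sumr_ge0 => j' _; rewrite intr_norm.
have [nu [hnp [hns [hnr hnb]]]] := hB w' hbound
   (ex_intro _ fr (conj hfr0 hrep')).
pose y : 'cV[R]_m := \col_i (((r i)%:~R + nu i) / N).
have hyf : dual_feasible A w y.
  apply/dual_feasibleE; split.
  - move=> j; under eq_bigr do rewrite mxE; rewrite sum_comb hnr hw'.
    apply: (mulIf (lt0r_neq0 hN)); rewrite divfK ?lt0r_neq0 //; ring.
  - move=> i; rewrite mxE; apply: divr_ge0; last exact: ltW.
    case: (classic (I i)) => hi.
      have h1 := floorD1_gt (N * yh i 0); rewrite intrD -/(r i) in h1.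
      have h2 := hnb i; have h3 := hTi i hi; have h4 := ler_norm (- nu i).
      rewrite normrN in h4; have h5 := ler_norm B.
      lra.
    by rewrite hns // /r hyh0 // mulr0 floor0 addr0.
have hy0 : forall i, ~ I i -> y i 0 = 0.
  by move=> i hi; rewrite mxE hns // /r hyh0 // mulr0 floor0 addr0 mul0r.
have hyc : cost b y = cost b ys.
  rewrite -hx0w'; apply/eqP; rewrite -subr_eq0 (@wd_id R m n A b w y x0 hyf); apply/eqP.
  apply: big1 => i _; case: (classic (I i)) => hi.
    by rewrite (implE hi hFx0) subrr mulr0.
  by rewrite hy0 // mul0r.
exists y; split.
  split => // y'' h''; rewrite !costE hyc; have := hys.2 y'' h''; by rewrite !costE.
move=> i; rewrite mxE; apply: padic_mul => //.
  by apply: padic_add => //; apply: padic_int.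
exact: padic_invp.
Qed.

End Dir31.


Unset Implicit Arguments.

Theorem theorem1p1 (R : realType) (m n : nat) (A : 'M[int]_(m, n)) (b : 'cV[int]_m)
  (p : nat) (hp : prime p) :
  (totally_dual_padic R p A b <->
     (forall F : 'cV[R]_n -> Prop, is_face (polyhedron A b) F -> (exists x, F x) ->
        padic_gen_cone R p A (implicit_eq A b F))) /\
  (totally_dual_padic R p A b <->
     (forall F : 'cV[R]_n -> Prop, is_face (polyhedron A b) F -> (exists x, F x) ->
        padic_gen_subspace R p A (implicit_eq A b F))).
Proof.
split; split.
- by move=> H1 F hF hne; apply: (@dir12 R m n A b p H1 F hF hne).
- by move=> H2; apply: (@dir31 R m n A b p hp) => F hF hne; apply: (@dir23 R m n A b p hp H2 F hF hne).
- move=> H1 F hF hne; apply: (@dir23 R m n A b p hp _ F hF hne).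
  by move=> F' hF' hne'; apply: (@dir12 R m n A b p H1 F' hF' hne').
- exact: (@dir31 R m n A b p hp).
Qed.
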